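(* Let $G$ be a graph on vertex set $\{1,\dots,n\}$ and consider the reliability extension of $\Gamma_{NC_1}$ on $G$ under the fractional attack model on player $x=1$, with baseline reliabilities $p^*_j\in(0,1]$ ($j\ne1$), a fixed reliability $p_1\in[0,1]$ of player $1$, common cost slopes $L,R>0$ and budget $B\ge0$. (i) If $G=K_n$ (complete graph), or $G=S_n$ is the star with center $1$, then the following profile is an optimal attack: order the nodes $2,\dots,n$ as $\sigma(2),\dots,\sigma(n)$ with $p^*_{\sigma(2)}\ge p^*_{\sigma(3)}\ge\dots\ge p^*_{\sigma(n)}$ (ties broken arbitrarily); for $i=2,3,\dots$ in turn, raise $p_{\sigma(i)}$ to $1$ while the remaining budget allows it, and when the remaining budget no longer allows raising $p_{\sigma(i)}$ to $1$, raise it as much as the remaining budget allows; leave all other reliabilities at their baseline values. (ii) If $G=S_n$ is the star with center $2$ (so $1$ is a leaf), then the profile obtained by the same procedure, but using the order $Q$ consisting of node $2$ first, followed by nodes $3,\dots,n$ in decreasing order of baseline reliability (ties broken arbitrarily), is an optimal attack.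
   Context: Game $\Gamma_{NC_1}$ on $G=(V,E)$: $v_{NC_1}(S)=|S\cup\delta(S)|$, where $\delta(S)$ is the set of vertices outside $S$ having a neighbour in $S$. For $T\subseteq S$, $\Pi_{T,S}=\prod_{i\in T}p_i\prod_{i\in S\setminus T}(1-p_i)$; the reliability extension with parameters $p=(p_1,\dots,p_n)$ is $\overline v(S)=\sum_{T\subseteq S}v(T)\Pi_{T,S}$. Shapley value: $Sh[v](x)=\frac1{n!}\sum_\pi[v(S^x_\pi\cup\{x\})-v(S^x_\pi)]$ over permutations $\pi$, $S^x_\pi$ the players preceding $x$. Fractional attack model on target $x$: $p_x$ is fixed; for every $j\ne x$ one may choose any $p_j\in[0,1]$ at cost $u_j(p_j)$, where $u_j(p)=L(p^*_j-p)$ if $p<p^*_j$ and $u_j(p)=R(p-p^*_j)$ if $p\ge p^*_j$. A profile is feasible if $\sum_{j\ne x}u_j(p_j)\le B$; an optimal attack is a feasible profile minimizing $Sh[\overline{v_{NC_1}}](x)$. *)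

(* Defs.v *)
From HB Require Import structures.
From mathcomp Require Import all_boot all_order all_algebra.
From mathcomp Require Import fingroup perm.
From mathcomp Require Import reals.
Set Implicit Arguments. Unset Strict Implicit. Unset Printing Implicit Defensive.
Import Order.TTheory GRing.Theory Num.Theory.
Local Open Scope ring_scope.

(* Vertices are 'I_n, i.e. {0,...,n-1}; paper's vertex k is our k-1. *)

Definition complete_graph (n : nat) : rel 'I_n := fun i j => i != j.
Definition star_graph (n : nat) (c : 'I_n) : rel 'I_n :=
  fun i j => (i != j) && ((i == c) || (j == c)).

Definition nbd_out (n : nat) (e : rel 'I_n) (S : {set 'I_n}) : {set 'I_n} :=
  [set j | (j \notin S) && [exists i in S, e i j]].

Definition v_NC1 (n : nat) (e : rel 'I_n) (S : {set 'I_n}) : nat :=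
  #|S :|: nbd_out e S|.

Section Rel.
Variable R : realType.

Definition PiTS (n : nat) (p : 'I_n -> R) (T S : {set 'I_n}) : R :=
  (\prod_(i in T) p i) * \prod_(i in S :\: T) (1 - p i).

Definition rel_ext (n : nat) (v : {set 'I_n} -> nat) (p : 'I_n -> R)
  (S : {set 'I_n}) : R :=
  \sum_(T in powerset S) (v T)%:R * PiTS p T S.

(* players preceding x in the ordering given by pi (pi j = position of j) *)
Definition preceding (n : nat) (pi : {perm 'I_n}) (x : 'I_n) : {set 'I_n} :=
  [set j | pi j < pi x]%N.

Definition shapley (n : nat) (w : {set 'I_n} -> R) (x : 'I_n) : R :=
  (n`!)%:R^-1 *
  \sum_(pi : {perm 'I_n}) (w (preceding pi x :|: [set x]) - w (preceding pi x)).

Definition Sh_NC1 (n : nat) (e : rel 'I_n) (p : 'I_n -> R) (x : 'I_n) : R :=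
  shapley (rel_ext (v_NC1 e) p) x.

Definition cost (L Rs : R) (pstar : R) (q : R) : R :=
  if q < pstar then L * (pstar - q) else Rs * (q - pstar).

Definition feasible (n : nat) (x : 'I_n) (px : R) (pstar : 'I_n -> R)
  (L Rs B : R) (q : 'I_n -> R) : Prop :=
  [/\ q x = px,
      (forall j, j != x -> 0 <= q j <= 1) &
      \sum_(j | j != x) cost L Rs (pstar j) (q j) <= B].

Definition optimal_attack (n : nat) (e : rel 'I_n) (x : 'I_n) (px : R)
  (pstar : 'I_n -> R) (L Rs B : R) (q : 'I_n -> R) : Prop :=
  feasible x px pstar L Rs B q /\
  forall q', feasible x px pstar L Rs B q' -> Sh_NC1 e q x <= Sh_NC1 e q' x.

Fixpoint greedy (n : nat) (pstar : 'I_n -> R) (Rs b : R) (s : seq 'I_n)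
  : 'I_n -> R :=
  match s with
  | [::] => pstar
  | j :: s' =>
    let c := Rs * (1 - pstar j) in
    if c <= b then
      fun k => if k == j then 1 else greedy pstar Rs (b - c) s' k
    else
      fun k => if k == j then pstar j + b / Rs else greedy pstar Rs 0 s' k
  end.

Definition greedy_profile (n : nat) (x : 'I_n) (px : R) (pstar : 'I_n -> R)
  (Rs B : R) (s : seq 'I_n) : 'I_n -> R :=
  fun k => if k == x then px else greedy pstar Rs B s k.

End Rel.

Definition vtx2 (n : nat) : 'I_n.+2 := @Ordinal n.+2 1 isT.

(* Main.v *)
Set Warnings "-notation-overridden,-ambiguous-paths,-deprecated".
Require Import Defs.
From HB Require Import structures.
From mathcomp Require Import all_boot all_order all_algebra.
From mathcomp Require Import fingroup perm.
From mathcomp Require Import reals.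
From mathcomp Require Import ring lra zify.
Import Order.TTheory GRing.Theory Num.Theory.
Local Open Scope ring_scope.
Set Implicit Arguments. Unset Strict Implicit. Unset Printing Implicit Defensive.
Section Key.
Variable R : realType.
Variable n : nat.
Implicit Types (S T : {set 'I_n}) (p : 'I_n -> R).

Lemma expand (f g : 'I_n -> R) S :
  \sum_(T in powerset S) (\prod_(i in T) f i * \prod_(i in S :\: T) g i) =
  \prod_(i in S) (f i + g i).
Proof.
pose F i := if i \in S then f i else 0.
pose G i := if i \in S then g i else 1.
have -> : \prod_(i in S) (f i + g i) = \prod_i (F i + G i).
  rewrite [RHS](bigID (mem S)) /= [X in _ * X]big1 ?mulr1.
    by apply: eq_bigr => i iS; rewrite /F /G iS.
  by move=> i /negbTE iS; rewrite /F /G iS add0r.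
rewrite bigA_distr [RHS](bigID (fun J => J \in powerset S)) /=.
rewrite [X in _ = _ + X]big1 ?addr0; last first.
  move=> J; rewrite powersetE => /subsetPn [i iJ iS].
  rewrite (bigD1 i) //= iJ /F (negbTE iS) mul0r //.
apply: eq_bigr.
move=> J; rewrite powersetE => /subsetP JS.
rewrite [RHS](bigID (mem J)) /=; congr (_ * _).
  by apply: eq_bigr => i iJ; rewrite iJ /F JS.
rewrite [RHS]big_mkcond [LHS]big_mkcond; apply: eq_bigr => i _.
rewrite !inE /G; case: (i \in J) => //=; case: (i \in S) => //.
Qed.

Variable e : rel 'I_n.
Variable x : 'I_n.

Definition covs T := [set j | [exists i in T, (i == j) || e i j]].
Definition Nx := [set y | (y == x) || e x y].
Definition Me y := [set i | (i == y) || e i y].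

Lemma v_eq T : v_NC1 e T = #|covs T|.
Proof.
rewrite /v_NC1; apply: eq_card => j; rewrite !inE.
case jT: (j \in T) => /=.
  by apply/esym/existsP; exists j; rewrite jT eqxx.
apply/existsP/existsP => [[i /andP [iT eij]]|[i /andP [iT /orP [/eqP ij|eij]]]].
- by exists i; rewrite iT eij orbT.
- by move: iT; rewrite ij jT.
- by exists i; rewrite iT.
Qed.

Lemma covsU1 T : covs (T :|: [set x]) = covs T :|: Nx.
Proof.
apply/setP => j; rewrite !inE; apply/existsP/orP.
- move=> [i /andP [] ]; rewrite !inE => /orP [iT h|/eqP -> h].
    by left; apply/existsP; exists i; rewrite iT.
  by right; move: h; rewrite (eq_sym x j).
- move=> [/existsP [i /andP [iT h]]|h].
    by exists i; rewrite !inE iT.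
  by exists x; rewrite !inE eqxx orbT /= (eq_sym x j).
Qed.

Lemma vdiff T :
  ((v_NC1 e (T :|: [set x]))%:R - (v_NC1 e T)%:R : R) =
  \sum_(y in Nx) (y \notin covs T)%:R.
Proof.
rewrite !v_eq covsU1.
have h : (#|covs T :|: Nx| = #|covs T| + #|Nx :\: covs T|)%N.
  have := cardsUI (covs T) Nx; have := cardsID (covs T) Nx.
  rewrite setIC => h1 h2.
  move: h1 h2; set a := #|covs T :&: Nx|; set b := #|Nx :\: covs T|; set c := #|covs T :|: Nx|; set d := #|covs T|; set f := #|Nx|; lia.
rewrite h natrD addrAC subrr add0r -sum1_card natr_sum.
rewrite big_mkcond [RHS]big_mkcond; apply: eq_bigr => y _.
rewrite !inE; by case: ((y == x) || e x y); case: [exists i in T, (i == y) || e i y].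
Qed.

Lemma marg (v : {set 'I_n} -> nat) p S : x \notin S ->
  rel_ext v p (S :|: [set x]) - rel_ext v p S =
  p x * \sum_(T in powerset S) ((v (T :|: [set x]))%:R - (v T)%:R) * PiTS p T S.
Proof.
move=> xS.
have E : rel_ext v p (S :|: [set x]) =
  \sum_(T in powerset S) ((v T)%:R * (1 - p x) + (v (T :|: [set x]))%:R * p x) * PiTS p T S.
  rewrite /rel_ext (bigID (fun T => x \in T)) /= addrC.
  under [X in _ = X]eq_bigr do rewrite mulrDl.
  rewrite big_split /=; congr (_ + _).
    rewrite (eq_bigl (fun T => T \in powerset S)); last first.
      move=> T; rewrite !powersetE; apply/andP/idP => [[/subsetP TS xT]|/subsetP TS].
        by apply/subsetP => i iT; have := TS i iT; rewrite !inE => /orP [//|/eqP ix]; move: xT; rewrite -ix iT.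
      split; last by apply/negP => /TS; rewrite (negbTE xS).
      by apply/subsetP => i /TS iS; rewrite !inE iS.
    apply: eq_bigr => T /[!powersetE] /subsetP TS.
    have xT : x \notin T by apply/negP => /TS; rewrite (negbTE xS).
    rewrite /PiTS -mulrA; congr (_ * _).
    have -> : (S :|: [set x]) :\: T = x |: (S :\: T).
      by apply/setP => i; rewrite !inE; case: eqP => [->|_]; rewrite ?orbT ?orbF ?xT.
    rewrite big_setU1 /= ?inE ?(negbTE xS) ?andbF //.
    by rewrite mulrCA mulrC.
  rewrite (reindex_onto (fun T => T :|: [set x]) (fun T => T :\ x)) /=; last first.
    by move=> T /andP [_ xT]; rewrite setUC setD1K.
  rewrite (eq_bigl (fun T => T \in powerset S)); last first.
    move=> T; rewrite !powersetE !inE eqxx orbT andbT.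
    apply/andP/idP => [[/subsetP h /eqP E]|/subsetP TS].
      apply/subsetP => i iT; have := h i; rewrite !inE iT => /(_ isT) /orP [//|/eqP ix].
      by move: iT; rewrite -E ix !inE eqxx.
    have xT : x \notin T by apply/negP => /TS; rewrite (negbTE xS).
    split.
      by apply/subsetP => i; rewrite !inE => /orP [/TS ->|->]; rewrite ?orbT.
    by apply/eqP/setP => i; rewrite !inE; case: eqP => [->|_] /=; rewrite ?eqxx ?(negbTE xT) ?orbF.
  apply: eq_bigr => T /[!powersetE] /subsetP TS.
  have xT : x \notin T by apply/negP => /TS; rewrite (negbTE xS).
  rewrite /PiTS -[RHS]mulrA; congr (_ * _).
  have -> : (S :|: [set x]) :\: (T :|: [set x]) = S :\: T.
    by apply/setP => i; rewrite !inE; case: eqP => [->|_] /=; rewrite ?eqxx ?(negbTE xS) ?(negbTE xT) ?orbF ?orbT ?andbT ?andbF.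
  rewrite setUC big_setU1 //=; ring.
rewrite E /rel_ext mulr_sumr -sumrB; apply: eq_bigr => T _; ring.
Qed.

Lemma ind_prod T y :
  ((y \notin covs T)%:R : R) = \prod_(i in T) ((i \notin Me y)%:R : R).
Proof.
case: (boolP (y \in covs T)) => h /=.
  move: h; rewrite inE => /existsP [i /andP [iT hi]].
  by rewrite (bigD1 i) //= inE hi /= mul0r.
rewrite big1 // => i iT; case: (boolP (i \in Me y)) => // /[!inE] hi.
by move: h; rewrite inE; case/existsP; exists i; rewrite iT.
Qed.

Lemma lemC p S y :
  \sum_(T in powerset S) (y \notin covs T)%:R * PiTS p T S =
  \prod_(l in S :&: Me y) (1 - p l).
Proof.
rewrite (eq_bigr (fun T => \prod_(i in T) ((i \notin Me y)%:R * p i) * \prod_(i in S :\: T) (1 - p i))); last first.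
  by move=> T _; rewrite ind_prod /PiTS mulrA -big_split.
rewrite expand [RHS]big_mkcond [LHS]big_mkcond; apply: eq_bigr => i _.
rewrite !inE; case: (i \in S) => //=; case: ((i == y) || e i y) => /=; ring.
Qed.

Definition Psi (Y : {set 'I_n}) (M : 'I_n -> {set 'I_n}) p :=
  \sum_(pi : {perm 'I_n}) \sum_(y in Y) \prod_(l in preceding pi x :&: M y) (1 - p l).

Lemma key p : Sh_NC1 e p x = (n`!)%:R^-1 * p x * Psi Nx Me p.
Proof.
rewrite /Sh_NC1 /shapley -mulrA; congr (_ * _).
rewrite /Psi mulr_sumr; apply: eq_bigr => pi _.
rewrite marg; last by rewrite inE ltnn.
congr (_ * _).
under eq_bigr do rewrite vdiff mulr_suml.
rewrite exchange_big /=; apply: eq_bigr => y _.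
exact: lemC.
Qed.

End Key.
Section PsiProps.
Variable R : realType.
Variable n : nat.
Variable x : 'I_n.

Definition upd2 (q : 'I_n -> R) (i k : 'I_n) (a b : R) : 'I_n -> R :=
  fun l => if l == i then a else if l == k then b else q l.

Lemma setD1_id (B : {set 'I_n}) a : a \notin B -> B :\ a = B.
Proof.
move=> aB; apply/setP => l; rewrite !inE; case: eqP => // ->.
by rewrite (negbTE aB).
Qed.

Lemma prod_split2 (A : {set 'I_n}) (F : 'I_n -> R) i k : i != k ->
  \prod_(l in A) F l =
  (if i \in A then F i else 1) * (if k \in A then F k else 1) *
  \prod_(l in A :\ i :\ k) F l.
Proof.
move=> ik.
have kA' : (k \in A :\ i) = (k \in A) by rewrite !inE eq_sym ik.
case iA: (i \in A).
  rewrite (big_setD1 i iA) /=.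
  case kA: (k \in A).
    by rewrite (big_setD1 k) ?kA' //= mulrA.
  by rewrite (setD1_id (B := A :\ i)) ?kA' ?kA // mulr1.
rewrite (setD1_id (B := A) (a := i)) ?iA // mul1r.
case kA: (k \in A).
  by rewrite (big_setD1 k).
by rewrite setD1_id ?kA // mul1r.
Qed.

Definition Psi' (Y : {set 'I_n}) (M : 'I_n -> {set 'I_n}) (p : 'I_n -> R) :=
  \sum_(pi : {perm 'I_n}) \sum_(y in Y) \prod_(l in preceding pi x :&: M y) (1 - p l).

Definition Wc (Y : {set 'I_n}) (M : 'I_n -> {set 'I_n}) (q : 'I_n -> R) i k (u v : bool) :=
  \sum_(pi : {perm 'I_n}) \sum_(y in Y)
    (if (if u then i \in preceding pi x :&: M y else i \notin preceding pi x :&: M y) &&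
        (if v then k \in preceding pi x :&: M y else k \notin preceding pi x :&: M y)
     then \prod_(l in preceding pi x :&: M y :\ i :\ k) (1 - q l) else 0).

Lemma Psi_dec Y M q i k a b : i != k ->
  Psi' Y M (upd2 q i k a b) =
  Wc Y M q i k false false + (1 - a) * Wc Y M q i k true false +
  (1 - b) * Wc Y M q i k false true + (1 - a) * (1 - b) * Wc Y M q i k true true.
Proof.
move=> ik; rewrite /Psi' /Wc !mulr_sumr -!big_split /=; apply: eq_bigr => pi _.
rewrite !mulr_sumr -!big_split /=; apply: eq_bigr => y _.
rewrite (prod_split2 _ _ ik).
have -> : \prod_(l in preceding pi x :&: M y :\ i :\ k) (1 - upd2 q i k a b l) =
          \prod_(l in preceding pi x :&: M y :\ i :\ k) (1 - q l).
  apply: eq_bigr => l; rewrite !inE /upd2 => /andP [/negbTE -> /andP [/negbTE -> _]].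
  by [].
have ki : k != i by rewrite eq_sym.
rewrite /upd2 !eqxx (negbTE ki).
case: (i \in _); case: (k \in _) => /=; ring.
Qed.

Lemma Wc_ge0 Y M q i k u v : (forall l, l != x -> q l <= 1) -> 0 <= Wc Y M q i k u v.
Proof.
move=> hq; apply: sumr_ge0 => pi _; apply: sumr_ge0 => y _.
case: ifP => // _; apply: prodr_ge0 => l; rewrite !inE => /andP [_ /andP [_ /andP [hl _]]].
rewrite subr_ge0; apply: hq; apply/negP => /eqP lx; by move: hl; rewrite lx ltnn.
Qed.

Lemma Psi_mono (Y : {set 'I_n}) (M : 'I_n -> {set 'I_n}) (q q' : 'I_n -> R) : (forall l, l != x -> q l <= q' l <= 1) ->
  Psi' Y M q' <= Psi' Y M q.
Proof.
move=> hq; apply: ler_sum => pi _; apply: ler_sum => y _.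
apply: ler_prod => l; rewrite !inE => /andP [hl _].
have lx : l != x by apply/negP => /eqP lx; move: hl; rewrite lx ltnn.
have := hq l lx; case/andP => h1 h2; apply/andP; split; lra.
Qed.

Lemma Psi_sym (Y : {set 'I_n}) (M : 'I_n -> {set 'I_n}) (tau : {perm 'I_n}) (p : 'I_n -> R) : tau x = x ->
  (forall y, (tau y \in Y) = (y \in Y)) ->
  (forall y l, (tau l \in M (tau y)) = (l \in M y)) ->
  Psi' Y M (fun l => p (tau l)) = Psi' Y M p.
Proof.
move=> tx hY hM; rewrite /Psi' [RHS](reindex_inj (mulgI (tau^-1)%g)) /=.
apply: eq_bigr => pi _.
rewrite [RHS](reindex_inj (@perm_inj _ tau)) /=.
rewrite [RHS](eq_bigl (fun y => y \in Y)); last by move=> y; rewrite hY.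
apply: eq_bigr => y _.
rewrite [RHS](reindex_inj (@perm_inj _ tau)) /=.
apply: eq_bigl => l; rewrite !inE hM !permM permK.
have -> : (tau^-1)%g x = x by rewrite -{1}tx permK.
by [].
Qed.

End PsiProps.
Section Greedy.
Variable R : realType.
Variable n : nat.
Variable pstar : 'I_n -> R.
Variable Rs : R.
Hypothesis Rs_gt0 : 0 < Rs.

Lemma greedy_out s b l : l \notin s -> greedy pstar Rs b s l = pstar l.
Proof.
have Rg := Rs_gt0.
elim: s b => [//|j s IH] b /=; rewrite in_cons negb_or => /andP [/negbTE lj ls].
by case: ifP => _; rewrite lj IH.
Qed.

Lemma greedy0 s : (forall l, l \in s -> pstar l <= 1) ->
  forall b l, b = 0 -> greedy pstar Rs b s l = pstar l.
Proof.
have Rg := Rs_gt0.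
elim: s => [//|j s IH] hs b l b0 /=.
have hs' : forall l, l \in s -> pstar l <= 1 by move=> l' hl'; apply: hs; rewrite in_cons hl' orbT.
have hj : pstar j <= 1 by apply: hs; rewrite in_cons eqxx.
case: ifP => hc; case: eqP => [->|_].
- rewrite b0 in hc; apply/eqP; rewrite eq_le hj /=.
  have : (1 - pstar j) <= 0 by rewrite -(pmulr_rle0 _ Rs_gt0).
  lra.
- apply: IH => //; rewrite b0 in hc *.
  have : (1 - pstar j) <= 0 by rewrite -(pmulr_rle0 _ Rs_gt0).
  have : 0 <= Rs * (1 - pstar j) by apply: mulr_ge0; lra.
  have hc' : Rs * (1 - pstar j) <= 0 := hc.
  move=> h1 h2; have -> : Rs * (1 - pstar j) = 0 by lra.
  lra.
- by rewrite b0 mul0r addr0.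
- by apply: IH.
Qed.

Lemma greedy_range s : (forall l, l \in s -> 0 <= pstar l <= 1) ->
  forall b l, 0 <= b -> l \in s -> pstar l <= greedy pstar Rs b s l <= 1.
Proof.
have Rg := Rs_gt0.
elim: s => [//|j s IH] hs b l b0 /=.
have hs' : forall l, l \in s -> 0 <= pstar l <= 1 by move=> l' hl'; apply: hs; rewrite in_cons hl' orbT.
have /andP [hj0 hj1] : 0 <= pstar j <= 1 by apply: hs; rewrite in_cons eqxx.
rewrite in_cons => hl.
case: ifP => hc; case: eqP => [->|lj].
- by rewrite hj1 lexx.
- apply: IH => //; first lra.
  by move: hl; rewrite (negbTE (introN eqP lj)).
- have h1 : 0 <= b / Rs by apply: divr_ge0; lra.
  have h2 : b / Rs <= 1 - pstar j.
    by rewrite ler_pdivrMr // mulrC; move: hc => /negbT; rewrite -ltNge => /ltW.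
  apply/andP; split; lra.
- have ls : l \in s by move: hl; rewrite (negbTE (introN eqP lj)).
  rewrite greedy0 //; first by rewrite lexx; case/andP: (hs' l ls).
  by move=> l' /hs' /andP [].
Qed.

Lemma greedy_cost s : uniq s -> (forall l, l \in s -> 0 <= pstar l <= 1) ->
  forall b, 0 <= b -> Rs * \sum_(l <- s) (greedy pstar Rs b s l - pstar l) <= b.
Proof.
have Rg := Rs_gt0.
elim: s => [|j s IH] us hs b b0 /=; first by rewrite big_nil mulr0.
move: us => /= /andP [js us].
have hs' : forall l, l \in s -> 0 <= pstar l <= 1 by move=> l' hl'; apply: hs; rewrite in_cons hl' orbT.
have /andP [hj0 hj1] : 0 <= pstar j <= 1 by apply: hs; rewrite in_cons eqxx.
rewrite big_cons /=.
case: ifP => hc; rewrite eqxx.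
- rewrite (eq_big_seq (fun l => greedy pstar Rs (b - Rs * (1 - pstar j)) s l - pstar l)); last first.
    by move=> l ls; case: eqP => // lj; move: js; rewrite -lj ls.
  have := IH us hs' (b - Rs * (1 - pstar j)); rewrite subr_ge0 => /(_ hc).
  rewrite mulrDr; lra.
- rewrite big_seq big1; last first.
    move=> l ls; case: eqP => [lj|_]; first by move: js; rewrite -lj ls.
    by rewrite greedy0 ?subrr // => l' /hs' /andP [].
  rewrite addr0 addrAC subrr add0r mulrC divfK //; apply: lt0r_neq0 => //.
Qed.

End Greedy.
Section Opt.
Variable R : realType.
Variable n : nat.
Variable x : 'I_n.
Variable Phi : ('I_n -> R) -> R.
Variable p1 : R.
Variable pstar : 'I_n -> R.
Variable Rs : R.
Hypothesis Rs_gt0 : 0 < Rs.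
Hypothesis pstar_rng : forall l, l != x -> 0 <= pstar l <= 1.

Definition adm (q : 'I_n -> R) := q x = p1 /\ forall l, l != x -> 0 <= q l <= 1.

Hypothesis Mono : forall q q', adm q -> adm q' -> (forall l, l != x -> q l <= q' l) ->
  Phi q' <= Phi q.

Definition dmove (q : 'I_n -> R) j k :=
  if 1 - q j <= q k - pstar k then 1 - q j else q k - pstar k.

Definition EX j k := forall q, adm q -> pstar j <= q j -> pstar k <= q k ->
  Phi (upd2 q j k (q j + dmove q j k) (q k - dmove q j k)) <= Phi q.

Fixpoint pairP (Q : 'I_n -> 'I_n -> Prop) (s : seq 'I_n) : Prop :=
  match s with [::] => True | j :: s' => (forall k, k \in s' -> Q j k) /\ pairP Q s' end.

Lemma move_mass j s : forall q, x \notin j :: s -> j \notin s -> uniq s ->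
  (forall k, k \in s -> EX j k) -> adm q -> (forall l, l \in j :: s -> pstar l <= q l) ->
  exists q', adm q' /\ (forall l, l \notin j :: s -> q' l = q l) /\
    (forall l, l \in j :: s -> pstar l <= q' l) /\ q j <= q' j /\
    q' j + \sum_(l <- s) q' l = q j + \sum_(l <- s) q l /\
    (q' j = 1 \/ forall l, l \in s -> q' l = pstar l) /\ Phi q' <= Phi q.
Proof.
elim: s => [|k s IH] q xs js us hEX hq hps.
  by exists q; do !split => //; right.
have Rg := Rs_gt0.
move: xs js us; rewrite !in_cons !negb_or /= => /andP [xj /andP [xk xs]] /andP [jk js] /andP [ks us].
have xj' : j != x by rewrite eq_sym.
have xk' : k != x by rewrite eq_sym.
have kj : k != j by rewrite eq_sym.
have /andP [pk0 pk1] := pstar_rng xk'.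
have /andP [qj0 qj1] := (proj2 hq) j xj'.
have /andP [qk0 qk1] := (proj2 hq) k xk'.
have hpj : pstar j <= q j by apply: hps; rewrite in_cons eqxx.
have hpk : pstar k <= q k by apply: hps; rewrite !in_cons eqxx orbT.
set d := dmove q j k.
have [d0 d1 d2] : [/\ 0 <= d, d <= 1 - q j & d <= q k - pstar k].
  rewrite /d /dmove; case: ifP => h; split; lra.
have dor : d = 1 - q j \/ d = q k - pstar k.
  by rewrite /d /dmove; case: ifP => h; [left|right].
set q1 := upd2 q j k (q j + d) (q k - d).
have q1j : q1 j = q j + d by rewrite /q1 /upd2 eqxx.
have q1k : q1 k = q k - d by rewrite /q1 /upd2 (negbTE kj) eqxx.
have q1o : forall l, l != j -> l != k -> q1 l = q l.
  by move=> l /negbTE lj /negbTE lk; rewrite /q1 /upd2 lj lk.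
have hq1 : adm q1.
  split; first by rewrite q1o // ?(proj1 hq) // eq_sym.
  move=> l lx; case: (eqVneq l j) => [->|lj]; first by rewrite q1j; apply/andP; split; lra.
  case: (eqVneq l k) => [->|lk]; first by rewrite q1k; apply/andP; split; lra.
  by rewrite q1o //; apply: (proj2 hq).
have hEXk : EX j k by apply: hEX; rewrite in_cons eqxx.
have Phi1 : Phi q1 <= Phi q by apply: hEXk.
have [q' [hq' [hout [hin [hjj [hsum [hor hPhi]]]]]]] :
    exists q', adm q' /\ (forall l, l \notin j :: s -> q' l = q1 l) /\
    (forall l, l \in j :: s -> pstar l <= q' l) /\ q1 j <= q' j /\
    q' j + \sum_(l <- s) q' l = q1 j + \sum_(l <- s) q1 l /\
    (q' j = 1 \/ forall l, l \in s -> q' l = pstar l) /\ Phi q' <= Phi q1.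
  apply: IH => //.
  - by rewrite in_cons negb_or xj.
  - by move=> k' hk'; apply: hEX; rewrite in_cons hk' orbT.
  - move=> l; rewrite in_cons => /orP [/eqP ->|ls]; first by rewrite q1j; lra.
    rewrite q1o; first by apply: hps; rewrite !in_cons ls !orbT.
      by apply/negP => /eqP lj; move: js; rewrite -lj ls.
    by apply/negP => /eqP lk; move: ks; rewrite -lk ls.
have q'k : q' k = q k - d by rewrite hout ?q1k // in_cons negb_or kj.
have sq1 : \sum_(l <- s) q1 l = \sum_(l <- s) q l.
  apply: eq_big_seq => l ls; apply: q1o.
    by apply/negP => /eqP lj; move: js; rewrite -lj ls.
  by apply/negP => /eqP lk; move: ks; rewrite -lk ls.
exists q'; split => //; split; [|split; [|split; [|split]]].
- move=> l; rewrite !in_cons !negb_or => /andP [lj /andP [lk ls]].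
  by rewrite hout ?q1o // in_cons negb_or lj.
- move=> l; rewrite !in_cons => /orP [/eqP ->|/orP [/eqP ->|ls]].
  + by apply: hin; rewrite in_cons eqxx.
  + rewrite q'k; lra.
  + by apply: hin; rewrite in_cons ls orbT.
- lra.
- by rewrite big_cons q'k; rewrite sq1 q1j in hsum; rewrite big_cons; lra.
split; last lra.
case: hor => [->|hs]; first by left.
case: dor => hd.
  left; apply/eqP; rewrite eq_le; have := (proj2 hq') j xj'; case/andP => _ ->.
  by rewrite /=; lra.
right => l; rewrite in_cons => /orP [/eqP ->|/hs //]; rewrite q'k; lra.
Qed.

End Opt.
Section Opt2.
Variable R : realType.
Variable n : nat.
Variable x : 'I_n.
Variable Phi : ('I_n -> R) -> R.
Variable p1 : R.
Variable pstar : 'I_n -> R.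
Variable Rs : R.
Hypothesis Rs_gt0 : 0 < Rs.
Hypothesis pstar_rng : forall l, l != x -> 0 <= pstar l <= 1.
Hypothesis Mono : forall q q', adm x p1 q -> adm x p1 q' -> (forall l, l != x -> q l <= q' l) ->
  Phi q' <= Phi q.

Lemma greedy_opt s : forall b r q, uniq s -> x \notin s -> pairP (EX x Phi p1 pstar) s ->
  0 <= b -> r x = p1 -> adm x p1 q -> (forall l, l \notin s -> q l = r l) ->
  (forall l, l \in s -> pstar l <= q l) ->
  Rs * \sum_(l <- s) (q l - pstar l) <= b ->
  Phi (fun l => if l \in s then greedy pstar Rs b s l else r l) <= Phi q.
Proof.
have Rg := Rs_gt0.
elim: s => [|j s IH] b r q us xs hP b0 hr hq hqr hps hbud.
  have -> : (fun l => if l \in [::] then greedy pstar Rs b [::] l else r l) = q.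
    apply: boolp.funext => l /=.
    case: (eqVneq l x) => [->|lx]; first by rewrite hr (proj1 hq).
    by rewrite hqr.
  by [].
move: us => /andP [js us]; move: xs; rewrite in_cons negb_or => /andP [xj xs].
case: hP => hEX hP.
have xj' : j != x by rewrite eq_sym.
have /andP [pj0 pj1] := pstar_rng xj'.
have xjs : x \notin j :: s by rewrite in_cons negb_or xj.
have [q' [hq' [hout [hin [hjj [hsum [hor hPhi]]]]]]] :=
  @move_mass R n x Phi p1 pstar Rs Rs_gt0 pstar_rng j s q xjs js us hEX hq hps.
have hjs : forall l, l \in s -> l != j.
  by move=> l ls; apply/negP => /eqP lj; move: js; rewrite -lj ls.
have hxs : forall l, l \in s -> l != x.
  by move=> l ls; apply/negP => /eqP lx; move: xs; rewrite -lx ls.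
move: hbud; rewrite big_cons sumrB => hbud.
have Sq'p : \sum_(l <- s) pstar l <= \sum_(l <- s) q' l.
  rewrite big_seq [X in _ <= X]big_seq; apply: ler_sum => l ls.
  by apply: hin; rewrite in_cons ls orbT.
case hc: (Rs * (1 - pstar j) <= b).
- have -> : greedy pstar Rs b (j :: s) =
      (fun k => if k == j then 1 else greedy pstar Rs (b - Rs * (1 - pstar j)) s k).
    by rewrite /= hc.
  set r' := fun l => if l == j then 1 else r l.
  set q'' := fun l => if l == j then 1 else q' l.
  have hq'' : adm x p1 q''.
    split; first by rewrite /q'' (negbTE xj) (proj1 hq').
    move=> l lx; rewrite /q''; case: eqP => _; first by rewrite ler01 lexx.
    exact: (proj2 hq' l lx).
  have P1 : Phi q'' <= Phi q'.
    apply: Mono => // l lx; rewrite /q''; case: eqP => [->|_] //.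
    by case/andP: (proj2 hq' j xj').
  have P2 : Phi (fun l => if l \in s then greedy pstar Rs (b - Rs * (1 - pstar j)) s l
                         else r' l) <= Phi q''.
    apply: IH => //.
    + by rewrite subr_ge0.
    + by rewrite /r' (negbTE xj).
    + move=> l ls; rewrite /q'' /r'; case: eqP => // /eqP lj.
      by rewrite hout ?hqr // in_cons negb_or lj.
    + move=> l ls; rewrite /q'' (negbTE (hjs l ls)).
      by apply: hin; rewrite in_cons ls orbT.
    + rewrite (eq_big_seq (fun l => q' l - pstar l)); last first.
        by move=> l ls; rewrite /q'' (negbTE (hjs l ls)).
      rewrite sumrB.
      case: hor => [hj1|hs].
        have -> : \sum_(l <- s) q' l = q j + \sum_(l <- s) q l - 1 by lra.
        lra.
      have -> : \sum_(l <- s) q' l = \sum_(l <- s) pstar l.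
        by apply: eq_big_seq => l ls; rewrite hs.
      rewrite subrr mulr0 subr_ge0; exact: hc.
  have E : (fun l => if l \in j :: s then
              (fun k => if k == j then 1 else greedy pstar Rs (b - Rs * (1 - pstar j)) s k) l
              else r l) =
           (fun l => if l \in s then greedy pstar Rs (b - Rs * (1 - pstar j)) s l else r' l).
    apply: boolp.funext => l /=; rewrite in_cons /r'.
    case: eqP => [->|_] /=; first by rewrite (negbTE js).
    by [].
  rewrite E; apply: le_trans P2 _; apply: le_trans P1 _; exact: hPhi.
- have hc' : b < Rs * (1 - pstar j) by rewrite ltNge hc.
  have -> : greedy pstar Rs b (j :: s) =
      (fun k => if k == j then pstar j + b / Rs else greedy pstar Rs 0 s k).
    by rewrite /= hc.
  have hbr : b / Rs < 1 - pstar j by rewrite ltr_pdivrMr // mulrC.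
  have hbr0 : 0 <= b / Rs by apply: divr_ge0 => //; lra.
  have hq'j : q' j - pstar j <= b / Rs.
    rewrite ler_pdivlMr //.
    have : Rs * (q' j - pstar j) <= b by nra.
    by rewrite mulrC.
  have hs : forall l, l \in s -> q' l = pstar l.
    case: hor => // hj1; exfalso; lra.
  set T := fun l => if l \in j :: s then (if l == j then pstar j + b / Rs else pstar l) else r l.
  have hT : adm x p1 T.
    split; first by rewrite /T in_cons (negbTE xj) (negbTE xs) /= hr.
    move=> l lx; rewrite /T in_cons; case: eqP => [->|/eqP lj] /=; first by apply/andP; split; lra.
    case: ifP => ls; first exact: pstar_rng.
    rewrite -hqr; last by rewrite in_cons (negbTE lj) ls.
    exact: (proj2 hq l lx).
  have E : (fun l => if l \in j :: s then
              (fun k => if k == j then pstar j + b / Rs else greedy pstar Rs 0 s k) l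
              else r l) = T.
    apply: boolp.funext => l /=; rewrite /T; case: ifP => // _.
    case: eqP => // _; apply: greedy0 => //; by move=> l' /hxs /pstar_rng /andP [].
  rewrite E; apply: le_trans hPhi; apply: Mono => // l lx.
  rewrite /T in_cons; case: eqP => [->|/eqP lj] /=; first lra.
  case: ifP => ls; first by rewrite hs.
  by rewrite hout ?hqr // in_cons (negbTE lj) ls.
Qed.


Lemma final_opt s B L : perm_eq s [seq j <- enum 'I_n | j != x] ->
  pairP (EX x Phi p1 pstar) s -> 0 <= B -> 0 < L ->
  feasible x p1 pstar L Rs B (greedy_profile x p1 pstar Rs B s) /\
  (forall q', feasible x p1 pstar L Rs B q' ->
     Phi (greedy_profile x p1 pstar Rs B s) <= Phi q').
Proof.
move=> hperm hP B0 L0.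
have Rg := Rs_gt0.
have us : uniq s by rewrite (perm_uniq hperm) filter_uniq // enum_uniq.
have hmem : forall l, (l \in s) = (l != x).
  by move=> l; rewrite (perm_mem hperm) mem_filter mem_enum andbT.
have sumE : forall F : 'I_n -> R, \sum_(l <- s) F l = \sum_(l | l != x) F l.
  move=> F; rewrite (perm_big _ hperm) /= big_filter.
  by rewrite -(big_enum_cond _ _ predT).
have hrng : forall l, l \in s -> 0 <= pstar l <= 1 by move=> l; rewrite hmem; exact: pstar_rng.
have xs : x \notin s by rewrite hmem eqxx.
have gr := greedy_range Rs_gt0 hrng.
split.
  split.
  - by rewrite /greedy_profile eqxx.
  - move=> j jx; rewrite /greedy_profile (negbTE jx).
    have js : j \in s by rewrite hmem.
    have /andP [h1 h2] := gr B j B0 js.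
    have /andP [h3 _] := pstar_rng jx.
    apply/andP; split; lra.
  - rewrite -sumE.
    rewrite (eq_big_seq (fun l => Rs * (greedy pstar Rs B s l - pstar l))); last first.
      move=> l ls; rewrite /greedy_profile /cost.
      have lx : l != x by rewrite -hmem.
      rewrite (negbTE lx).
      have /andP [h1 _] := gr B l B0 ls.
      by rewrite ltNge h1.
    rewrite -mulr_sumr; exact: greedy_cost.
move=> q' [hx hr hc].
set qt := fun l => if l == x then p1 else (if q' l < pstar l then pstar l else q' l).
set r := fun l => if l == x then p1 else pstar l.
have hadm' : adm x p1 q' by split.
have hqt : adm x p1 qt.
  split; first by rewrite /qt eqxx.
  move=> l lx; rewrite /qt (negbTE lx); case: ifP => _; first exact: pstar_rng.
  exact: hr.
have rx : r x = p1 by rewrite /r eqxx.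
have G := @greedy_opt s B r qt us xs hP B0 rx hqt.
have E : (fun l => if l \in s then greedy pstar Rs B s l else r l) =
         greedy_profile x p1 pstar Rs B s.
  apply: boolp.funext => l; rewrite hmem /greedy_profile /r.
  by case: eqP.
rewrite -E; apply: le_trans (G _ _ _) _.
- by move=> l; rewrite hmem negbK /qt /r => ->.
- move=> l; rewrite hmem /qt => /negbTE ->; case: ifP => // /negbT.
  by rewrite -leNgt.
- apply: le_trans hc; rewrite -sumE mulr_sumr big_seq [X in _ <= X]big_seq.
  apply: ler_sum => l; rewrite hmem => lx; rewrite /qt /cost (negbTE lx).
  case: ifP => h.
    rewrite subrr mulr0; apply: mulr_ge0; lra.
  by [].
apply: Mono => // l lx; rewrite /qt (negbTE lx); case: ifP => h; last by [].
by apply: ltW.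
Qed.

End Opt2.
Section Concrete.
Variable R : realType.
Variable n : nat.
Variable e : rel 'I_n.
Variable x : 'I_n.
Variable p1 : R.
Variable pstar : 'I_n -> R.
Hypothesis p1_ge0 : 0 <= p1.

Definition PhiS (q : 'I_n -> R) := Sh_NC1 e q x.

Lemma K_ge0 : 0 <= (n`!)%:R^-1 * p1 :> R.
Proof. by apply: mulr_ge0 => //; rewrite invr_ge0 ler0n. Qed.

Lemma Mono_Sh q q' : adm x p1 q -> adm x p1 q' -> (forall l, l != x -> q l <= q' l) ->
  PhiS q' <= PhiS q.
Proof.
move=> [hx hr] [hx' hr'] hle; rewrite /PhiS !key hx hx'.
apply: ler_wpM2l; first exact: K_ge0.
apply: (@Psi_mono R n x) => l lx; rewrite hle //=; by case/andP: (hr' l lx).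
Qed.

Lemma upd2_same (q : 'I_n -> R) j k : upd2 q j k (q j) (q k) = q.
Proof. by apply: boolp.funext => l; rewrite /upd2; case: eqP => [->|_] //; case: eqP => [->|]. Qed.

Lemma dmove_facts q j k : adm x p1 q -> j != x -> k != x -> pstar k <= q k ->
  [/\ 0 <= dmove pstar q j k, dmove pstar q j k <= 1 - q j,
      dmove pstar q j k <= q k - pstar k &
      dmove pstar q j k = 1 - q j \/ dmove pstar q j k = q k - pstar k].
Proof.
move=> [_ hr] jx kx hk; have /andP [h1 h2] := hr j jx.
rewrite /dmove; case: ifP => h; split; try lra; by [left|right].
Qed.

Lemma EX_sym j k : j != k -> j != x -> k != x -> pstar k <= pstar j ->
  (forall a b, e (tperm j k a) (tperm j k b) = e a b) ->
  EX x PhiS p1 pstar j k.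
Proof.
move=> jk jx kx hpjk haut q hq hj hk.
have [d0 d1 d2 dor] := dmove_facts hq jx kx hk.
move: d0 d1 d2 dor; set d := dmove pstar q j k => d0 d1 d2 dor.
have [hx hr] := hq.
have /andP [qj0 qj1] := hr j jx.
have /andP [qk0 qk1] := hr k kx.
rewrite /PhiS !key /upd2 (negbTE (introN eqP (fun h : x = j => (negP jx) (introT eqP (esym h))))).
rewrite (negbTE (introN eqP (fun h : x = k => (negP kx) (introT eqP (esym h))))) hx.
rewrite -/(upd2 q j k (q j + d) (q k - d)).
apply: ler_wpM2l; first exact: K_ge0.
rewrite -[X in _ <= Psi _ _ _ X](upd2_same q j k).
change (Psi' x (Nx e x) (Me e) (upd2 q j k (q j + d) (q k - d)) <=
        Psi' x (Nx e x) (Me e) (upd2 q j k (q j) (q k))).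
have sym : Psi' x (Nx e x) (Me e) (upd2 q j k 1 0) = Psi' x (Nx e x) (Me e) (upd2 q j k 0 1).
  have tx : tperm j k x = x by rewrite tpermD // eq_sym.
  rewrite -(@Psi_sym R n x (Nx e x) (Me e) (tperm j k) (upd2 q j k 1 0)) //.
  - congr Psi'; apply: boolp.funext => l; rewrite /upd2.
    case: (tpermP j k l) => [->|->|lj lk].
    + by rewrite !eqxx eq_sym (negbTE jk).
    + by rewrite !eqxx eq_sym (negbTE jk).
    + by rewrite (introF eqP lj) (introF eqP lk).
  - move=> y; rewrite !inE -{1}tx (inj_eq perm_inj); congr (_ || _).
    by rewrite -{1}tx haut.
  - move=> y l; rewrite !inE (inj_eq perm_inj) haut //.
rewrite (Psi_dec _ _ _ _ _ _ jk) (Psi_dec _ _ _ _ _ _ jk) in sym.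
rewrite (Psi_dec _ _ _ _ _ _ jk) (Psi_dec _ _ _ _ _ _ jk).
have W0 := @Wc_ge0 R n x (Nx e x) (Me e) q j k true true (fun l lx => proj2 (andP (hr l lx))).
have hW : Wc x (Nx e x) (Me e) q j k true false = Wc x (Nx e x) (Me e) q j k false true.
  move: sym; rewrite !subr0 !subrr !mul0r !mulr0 !mul1r !mul0r !addr0 => /addrI h.
  by rewrite h.
have h : 0 <= Wc x (Nx e x) (Me e) q j k true true * (d * (q j + d - q k)).
  by apply: mulr_ge0 => //; apply: mulr_ge0 => //; case: dor => ->; lra.
rewrite hW; lra.
Qed.

End Concrete.
Section Special.
Variable R : realType.
Variable n : nat.
Variable x c : 'I_n.
Variable p1 : R.
Variable pstar : 'I_n -> R.
Hypothesis p1_ge0 : 0 <= p1.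
Hypothesis xc : x != c.

Let e := star_graph c.

Lemma NxE : Nx e x = [set x; c].
Proof.
apply/setP => y; rewrite !inE /e /star_graph (negbTE xc) /=.
by case: (eqVneq y x) => [->|yx] //=; rewrite eq_sym yx /=.
Qed.

Lemma MecE : Me e c = setT.
Proof.
apply/setP => y; rewrite !inE /e /star_graph eqxx orbT andbT.
by case: eqP.
Qed.

Lemma MexE k : k != x -> k != c -> k \notin Me e x.
Proof.
move=> kx kc; rewrite !inE /e /star_graph (negbTE kx) (negbTE kc) (negbTE xc) /=.
by [].
Qed.

Lemma cMex : c \in Me e x.
Proof. by rewrite !inE /e /star_graph eqxx /= andbT; case: (c == x). Qed.

Lemma Psi_split (q : 'I_n -> R) : Psi' x (Nx e x) (Me e) q =
  Psi' x [set x] (Me e) q + Psi' x [set x] (fun _ => setT) q.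
Proof.
rewrite /Psi' -big_split; apply: eq_bigr => pi _ /=.
rewrite NxE big_setU1 /=; last by rewrite inE.
by rewrite !big_set1 MecE.
Qed.

Lemma EX_special k : k != x -> k != c -> EX x (PhiS e x) p1 pstar c k.
Proof.
move=> kx kc q hq hj hk.
have cx : c != x by rewrite eq_sym.
have ck : c != k by rewrite eq_sym.
have [d0 d1 d2 dor] := dmove_facts hq cx kx hk.
move: d0 d1 d2 dor; set d := dmove pstar q c k => d0 d1 d2 dor.
have [hx hr] := hq.
have /andP [qj0 qj1] := hr c cx.
have /andP [qk0 qk1] := hr k kx.
rewrite /PhiS !key /upd2 (negbTE xc) (negbTE (introN eqP (fun h : x = k => (negP kx) (introT eqP (esym h))))) hx.
rewrite -/(upd2 q c k (q c + d) (q k - d)).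
apply: ler_wpM2l; first exact: K_ge0.
rewrite -[X in _ <= Psi _ _ _ X](upd2_same q c k).
change (Psi' x (Nx e x) (Me e) (upd2 q c k (q c + d) (q k - d)) <=
        Psi' x (Nx e x) (Me e) (upd2 q c k (q c) (q k))).
rewrite !Psi_split.
have sym : Psi' x [set x] (fun _ => setT) (upd2 q c k 1 0) =
           Psi' x [set x] (fun _ => setT) (upd2 q c k 0 1).
  have tx : tperm c k x = x by rewrite tpermD // eq_sym.
  rewrite -(@Psi_sym R n x [set x] (fun _ => setT) (tperm c k) (upd2 q c k 1 0)) //.
  - congr Psi'; apply: boolp.funext => l; rewrite /upd2.
    case: (tpermP c k l) => [->|->|lj lk].
    + by rewrite !eqxx eq_sym (negbTE ck).
    + by rewrite !eqxx eq_sym (negbTE ck).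
    + by rewrite (introF eqP lj) (introF eqP lk).
  - by move=> y; rewrite !inE -{1}tx (inj_eq perm_inj).
  - by move=> y l; rewrite !inE.
rewrite (Psi_dec _ _ _ _ _ _ ck) (Psi_dec _ _ _ _ _ _ ck) in sym.
rewrite (Psi_dec _ _ _ _ _ _ ck) (Psi_dec _ _ _ _ _ _ ck).
rewrite (Psi_dec _ _ _ _ _ _ ck) (Psi_dec _ _ _ _ _ _ ck).
have hW : Wc x [set x] (fun _ => setT) q c k true false =
          Wc x [set x] (fun _ => setT) q c k false true.
  move: sym; rewrite !subr0 !subrr !mul0r !mulr0 !mul1r !mul0r !addr0 => /addrI h.
  by rewrite h.
have kP : forall pi, (k \in preceding pi x :&: Me e x) = false.
  by move=> pi; rewrite inE (negbTE (MexE kx kc)) andbF.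
have A01 : Wc x [set x] (Me e) q c k false true = 0.
  by rewrite /Wc; apply: big1 => pi _; rewrite big_set1 kP andbF.
have A11 : Wc x [set x] (Me e) q c k true true = 0.
  by rewrite /Wc; apply: big1 => pi _; rewrite big_set1 kP andbF.
have hq1 : forall l, l != x -> q l <= 1 by move=> l lx; case/andP: (hr l lx).
have B0 := @Wc_ge0 R n x [set x] (fun _ => setT) q c k true true hq1.
have Bbound : Wc x [set x] (fun _ => setT) q c k true true <=
              Wc x [set x] (Me e) q c k true false.
  rewrite /Wc; apply: ler_sum => pi _; rewrite !big_set1 kP /= !in_setI !in_setT !andbT cMex andbT.
  rewrite [X in _ <= (if _ then X else _)]big_pred0; last first.
    move=> l; rewrite !inE /e /star_graph (negbTE xc) orbF.
    case: (eqVneq l k) => //= _; case: (eqVneq l c) => //= _.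
    case: (eqVneq l x) => [->|_] /=; first by rewrite ltnn.
    by rewrite andbF.
  case: (c \in preceding pi x) => //=.
  case: (k \in preceding pi x) => //=.
  apply: prodr_ile1 => l; rewrite !inE => /andP [_ /andP [_ hl]].
  have lx : l != x by apply/negP => /eqP lx; move: hl; rewrite lx ltnn.
  have /andP [h1 h2] := hr l lx.
  apply/andP; split; lra.
rewrite A01 A11 hW.
have h1 : 0 <= d * (Wc x [set x] (Me e) q c k true false - Wc x [set x] (fun _ => setT) q c k true true).
  by apply: mulr_ge0; lra.
have h2 : 0 <= d * (Wc x [set x] (fun _ => setT) q c k true true * (1 - (q k - q c - d))).
  by apply: mulr_ge0 => //; apply: mulr_ge0 => //; lra.
lra.
Qed.

End Special.
Unset Implicit Arguments.
Lemma pairP_from (R : realType) (n : nat) (r : rel 'I_n) (P : 'I_n -> 'I_n -> Prop) s :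
  pairwise r s -> uniq s ->
  (forall j k, j \in s -> k \in s -> j != k -> r j k -> P j k) -> pairP P s.
Proof.
elim: s => [//|j s IH]; rewrite pairwise_cons => /andP [/allP hj hs] /andP [js us] H.
split.
  move=> k ks; apply: H; rewrite ?in_cons ?eqxx ?ks ?orbT //; last exact: hj.
  by apply/negP => /eqP jk; move: js; rewrite jk ks.
apply: IH => // j' k' j's k's; apply: H; by rewrite in_cons ?j's ?k's orbT.
Qed.

Lemma star_aut n (c : 'I_n) (tau : {perm 'I_n}) : tau c = c ->
  forall a b, star_graph c (tau a) (tau b) = star_graph c a b.
Proof.
move=> tc a b; rewrite /star_graph /=.
have E : forall u v, (tau u == tau v) = (u == v).
  by move=> u v; apply/eqP/eqP => [/perm_inj|->].
have F : forall u, (tau u == c) = (u == c) by move=> u; rewrite -{1}tc E.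
by rewrite E !F.
Qed.

Lemma complete_aut n (tau : {perm 'I_n}) :
  forall a b, complete_graph (tau a) (tau b) = complete_graph a b.
Proof.
have E : forall u v, (tau u == tau v) = (u == v).
  by move=> u v; apply/eqP/eqP => [/perm_inj|->].
by move=> a b; rewrite /complete_graph /= E.
Qed.

Theorem theorem4 (R : realType) :
  (* (i): G = K_n or G = star with center 1 (our ord0); n = m.+1 >= 1 *)
  (forall (m : nat) (e : rel 'I_m.+1),
     (e = @complete_graph m.+1 \/ e = star_graph ord0) ->
   forall (pstar : 'I_m.+1 -> R) (p1 L Rs B : R),
     (forall j, j != ord0 -> 0 < pstar j <= 1) ->
     0 <= p1 <= 1 -> 0 < L -> 0 < Rs -> 0 <= B ->
   forall s : seq 'I_m.+1,
     perm_eq s [seq j <- enum 'I_m.+1 | j != ord0] ->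
     sorted (fun a b => pstar b <= pstar a) s ->
     optimal_attack e ord0 p1 pstar L Rs B
       (greedy_profile ord0 p1 pstar Rs B s)) /\
  (* (ii): G = star with center 2 (our vtx2); n = m.+2 >= 2 *)
  (forall (m : nat) (pstar : 'I_m.+2 -> R) (p1 L Rs B : R),
     (forall j, j != ord0 -> 0 < pstar j <= 1) ->
     0 <= p1 <= 1 -> 0 < L -> 0 < Rs -> 0 <= B ->
   forall t : seq 'I_m.+2,
     perm_eq t [seq j <- enum 'I_m.+2 | (j != ord0) && (j != vtx2 m)] ->
     sorted (fun a b => pstar b <= pstar a) t ->
     optimal_attack (star_graph (vtx2 m)) ord0 p1 pstar L Rs B
       (greedy_profile ord0 p1 pstar Rs B (vtx2 m :: t))).
Proof.
split.
- move=> m e he pstar p1 L Rs B hp /andP [p10 p11] L0 Rs0 B0 s hperm hsort.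
  have prng : forall l, l != ord0 -> 0 <= pstar l <= 1.
    by move=> l /hp /andP [h1 h2]; rewrite ltW.
  have us : uniq s by rewrite (perm_uniq hperm) filter_uniq // enum_uniq.
  have hmem : forall l, (l \in s) = (l != ord0).
    by move=> l; rewrite (perm_mem hperm) mem_filter mem_enum andbT.
  have H := @final_opt R m.+1 ord0 (PhiS e ord0) p1 pstar Rs Rs0 prng (@Mono_Sh R m.+1 e ord0 p1 p10) s B L hperm.
  apply: H => //.
  apply: (@pairP_from R m.+1 (fun a b => pstar b <= pstar a)) => //.
    by rewrite -sorted_pairwise //; move=> a b c h1 h2; apply: le_trans h2 h1.
  move=> j k js ks jk hjk; apply: EX_sym => //; rewrite -?hmem //.
  move=> a b; case: he => ->; first exact: complete_aut.
  by apply: star_aut; apply: tpermD; rewrite -hmem.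
- move=> m pstar p1 L Rs B hp /andP [p10 p11] L0 Rs0 B0 t hperm hsort.
  have prng : forall l, l != ord0 -> 0 <= pstar l <= 1.
    by move=> l /hp /andP [h1 h2]; rewrite ltW.
  have ut : uniq t by rewrite (perm_uniq hperm) filter_uniq // enum_uniq.
  have hmem : forall l, (l \in t) = (l != ord0) && (l != vtx2 m).
    by move=> l; rewrite (perm_mem hperm) mem_filter mem_enum andbT.
  have c0 : vtx2 m != ord0 by [].
  have hperm' : perm_eq (vtx2 m :: t) [seq j <- enum 'I_m.+2 | j != ord0].
    apply: uniq_perm.
    - by rewrite /= ut andbT hmem eqxx andbF.
    - by rewrite filter_uniq // enum_uniq.
    - move=> l; rewrite mem_filter mem_enum andbT in_cons hmem.
      by case: (eqVneq l (vtx2 m)) => [->|] //=; rewrite andbT.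
  have H := @final_opt R m.+2 ord0 (PhiS (star_graph (vtx2 m)) ord0) p1 pstar Rs Rs0 prng
    (@Mono_Sh R m.+2 (star_graph (vtx2 m)) ord0 p1 p10) (vtx2 m :: t) B L hperm'.
  apply: H => //.
  split.
    move=> k; rewrite hmem => /andP [k0 kc].
    apply: EX_special => //; by rewrite eq_sym.
  apply: (@pairP_from R m.+2 (fun a b => pstar b <= pstar a)) => //.
    by rewrite -sorted_pairwise //; move=> a b c h1 h2; apply: le_trans h2 h1.
  move=> j k; rewrite !hmem => /andP [j0 jc] /andP [k0 kc] jk hjk.
  apply: EX_sym => //.
  by apply: star_aut; apply: tpermD.
Qed.
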